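(* Let $\mathcal{B}$ be a $\sigma$-algebra on a nonempty set $E$ and let $\nu$ be an essential $\sigma$-maxitive measure on $\mathcal{B}$. Then $\nu$ is autocontinuous. Moreover, if the empty set is the only $\nu$-negligible subset of $E$, then $\nu$ has a cardinal density, i.e. there is a map $c:E\to[0,\infty]$ with $\nu(B)=\sup_{x\in B}c(x)$ for all $B\in\mathcal{B}$.
   Context: A maxitive measure on $\mathcal{B}$ is a map $\nu:\mathcal{B}\to[0,\infty]$ with $\nu(\emptyset)=0$ and $\nu(B\cup B')=\max(\nu(B),\nu(B'))$; it is $\sigma$-maxitive if moreover it is continuous from below: $\nu(\bigcup_n B_n)=\lim_n\nu(B_n)$ for every nondecreasing sequence $B_1\subset B_2\subset\cdots$ in $\mathcal{B}$. $\nu$ is essential if there exists a $\sigma$-finite $\sigma$-additive measure $m$ on $\mathcal{B}$ such that $\nu(B)>0\iff m(B)>0$ for all $B\in\mathcal{B}$. A subset $N\subset E$ is $\nu$-negligible if $N\subset G$ for some $G\in\mathcal{B}$ with $\nu(G)=0$. A map $f:E\to[0,\infty]$ is $\mathcal{B}$-measurable if $\{f>t\}\in\mathcal{B}$ for all $t\geq0$. The $\nu$-essential supremum is $\bigoplus^{\nu}_{x\in B}f(x)=\inf\{t>0:B\cap\{f>t\}\text{ is }\nu\text{-negligible}\}$. $\nu$ is autocontinuous if there is a $\mathcal{B}$-measurable $f:E\to[0,\infty]$ with $\nu(B)=\bigoplus^{\nu}_{x\in B}f(x)$ for all $B\in\mathcal{B}$. *)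

(* Defs.v *)
From HB Require Import structures.
From mathcomp Require Import all_boot all_order all_algebra.
From mathcomp Require Import all_classical all_reals all_analysis.
Set Implicit Arguments. Unset Strict Implicit. Unset Printing Implicit Defensive.
Import Order.TTheory GRing.Theory Num.Theory.
Local Open Scope classical_set_scope.
Local Open Scope ring_scope.
Local Open Scope ereal_scope.

Section Maxitive.
Context (d : measure_display) (T : measurableType d) (R : realType).
Implicit Types (nu : set T -> \bar R).

Definition maxitive nu :=
  nu set0 = 0 /\ (forall B, measurable B -> 0 <= nu B) /\
  forall B B', measurable B -> measurable B' -> nu (B `|` B') = maxe (nu B) (nu B').

Definition sigma_maxitive nu :=
  maxitive nu /\
  forall B : (set T)^nat, (forall n, measurable (B n)) ->
    {homo B : n m / (n <= m)%N >-> n `<=` m} ->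
    (fun n => nu (B n)) @ \oo --> nu (\bigcup_n B n).

Definition essential nu :=
  exists m : {measure set T -> \bar R}, sigma_finite setT m /\
    forall B, measurable B -> (0 < nu B <-> 0 < m B).

Definition max_negligible nu (N : set T) :=
  exists G, [/\ measurable G, N `<=` G & nu G = 0].

Definition Bmeasurable (f : T -> \bar R) :=
  forall t : R, (0 <= t)%R -> measurable [set x | t%:E < f x].

Definition esssup nu (B : set T) (f : T -> \bar R) :=
  ereal_inf [set t%:E | t in [set t : R | (0 < t)%R /\
             max_negligible nu (B `&` [set x | t%:E < f x])]].

Definition autocontinuous nu :=
  exists f : T -> \bar R, (forall x, 0 <= f x) /\ Bmeasurable f /\
    forall B, measurable B -> nu B = esssup nu B f.

(* supremum in [0,+oo] (sup of the empty family is 0) *)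
Definition sup0 (B : set T) (c : T -> \bar R) := ereal_sup ([set 0] `|` c @` B).

Definition has_cardinal_density nu :=
  exists c : T -> \bar R, (forall x, 0 <= c x) /\
    forall B, measurable B -> nu B = sup0 B c.
End Maxitive.

(* Main.v *)
Require Import Defs.
From HB Require Import structures.
From mathcomp Require Import all_boot all_order all_algebra.
From mathcomp Require Import all_classical all_reals all_analysis.
From mathcomp Require Import lra measurable_realfun.
Import Order.TTheory GRing.Theory Num.Theory.

Section Helpers.
Local Open Scope classical_set_scope.
Local Open Scope ring_scope.
Local Open Scope ereal_scope.
Context (d : measure_display) (T : measurableType d) (R : realType).
Variable nu : set T -> \bar R.
Hypothesis Hnu : sigma_maxitive nu.

Lemma nu0 : nu set0 = 0. Proof. by case: Hnu => -[]. Qed.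
Lemma nu_ge0 A : measurable A -> 0 <= nu A. Proof. by move=> mA; case: Hnu => -[_ [+ _]] _; apply. Qed.
Lemma nuU A B : measurable A -> measurable B -> nu (A `|` B) = maxe (nu A) (nu B).
Proof. by move=> mA mB; case: Hnu => -[_ [_ +]] _; apply. Qed.

Lemma nu_le A B : measurable A -> measurable B -> A `<=` B -> nu A <= nu B.
Proof.
move=> mA mB AB; have -> : B = A `|` B by rewrite setUidr.
by rewrite nuU // le_max lexx.
Qed.

Lemma nu_Ule A B t : measurable A -> measurable B -> nu A <= t -> nu B <= t ->
  nu (A `|` B) <= t.
Proof. by move=> mA mB ? ?; rewrite nuU // ge_max; apply/andP. Qed.

Lemma nu_bigcup_le (A : (set T)^nat) t : (forall n, measurable (A n)) ->
  (forall n, nu (A n) <= t) -> nu (\bigcup_n A n) <= t.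
Proof.
move=> mA At.
pose D k := \bigcup_(j in [set j | (j <= k)%N]) A j.
have mD k : measurable (D k) by apply: bigcup_measurable => j _; exact: mA.
have DS k : D k.+1 = D k `|` A k.+1.
  rewrite /D predeqE => x; split.
    case=> j /= jk Ajx; move: jk; rewrite leq_eqVlt ltnS => /orP[/eqP jk|jk].
      by subst j; right.
    by left; exists j.
  move=> [[j /= jk Ajx]|Ax].
    by exists j => //=; exact: leqW.
  by exists k.+1 => //=.
have Dt k : nu (D k) <= t.
  elim: k => [|k IH].
    have -> : D 0%N = A 0%N.
      rewrite /D predeqE => x; split; first by case=> j /=; rewrite leqn0 => /eqP->.
      by move=> ?; exists 0%N.
    exact: At.
  by rewrite DS; apply: nu_Ule.
have DA : \bigcup_k D k = \bigcup_n A n.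
  rewrite predeqE => x; split; first by case=> k _ [j _ ?]; exists j.
  by case=> j _ ?; exists j => //; exists j => /=.
have homD : {homo D : n m / (n <= m)%N >-> n `<=` m}.
  by move=> n m nm x [j /= jn ?]; exists j => //=; exact: leq_trans nm.
have := (proj2 Hnu) D mD homD; rewrite DA => cv.
rewrite -(cvg_lim _ cv) //; apply: lime_le; first exact: cvgP cv.
exact: nearW.
Qed.

Lemma nu_bigcup_leP (A : (set T)^nat) (P : set nat) t :
  (forall n, P n -> measurable (A n) /\ nu (A n) <= t) ->
  0 <= t -> nu (\bigcup_(n in P) A n) <= t.
Proof.
move=> HA t0.
pose A' n := if pselect (P n) then A n else set0.
have -> : \bigcup_(n in P) A n = \bigcup_n A' n.
  rewrite predeqE => x; split.
    by case=> n Pn ?; exists n => //; rewrite /A'; case: pselect.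
  by case=> n _; rewrite /A'; case: pselect => // Pn ?; exists n.
by apply: nu_bigcup_le => n; rewrite /A'; case: pselect => Pn /=;
  first [by case: (HA n Pn) | by rewrite nu0 | exact: measurable0].
Qed.


Lemma max_set (m : {measure set T -> \bar R}) F t : measurable F -> m F < +oo ->
  0 <= t ->
  exists D, [/\ measurable D, D `<=` F, nu D <= t &
    forall C, measurable C -> C `<=` F -> nu C <= t -> m C <= m D].
Proof.
move=> mF mFoo t0.
pose fam := [set C | [/\ measurable C, C `<=` F & nu C <= t]].
have finC C : fam C -> m C \is a fin_num.
  case=> mC CF _; rewrite ge0_fin_numE ?measure_ge0 //.
  by apply: le_lt_trans mFoo; apply: le_measure => //; rewrite inE.
have fam0 : fam set0 by rewrite /fam /=; split => //; rewrite nu0.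

pose S := [set fine (m C) | C in fam].
have hS : has_sup S.
  split; first by exists (fine (m set0)), set0.
  exists (fine (m F)) => y [C [mC CF Ct] <-].
  apply: fine_le; first by apply: finC.
    by rewrite ge0_fin_numE ?measure_ge0.
  by apply: le_measure => //; rewrite inE.
have hk k : exists C, fam C /\ (sup S - k.+1%:R^-1 < fine (m C))%R.
  have [y [C fC <-] hy] := @sup_adherent R S (k.+1%:R^-1)%R (ltac:(by rewrite invr_gt0)) hS.
  by exists C.
have [Cs HCs] := choice hk.
pose D := \bigcup_k Cs k.
have mD : measurable D by apply: bigcup_measurable => k _; case: (HCs k) => -[].
have famD : fam D.
  split => //; first by move=> x [k _]; case: (HCs k) => -[_ + _] _; apply.
  by apply: nu_bigcup_le => k; case: (HCs k) => -[].
case: (famD) => _ DF Dt.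
exists D; split => // C mC CF Ct.
have fC : fam C by [].
rewrite -(fineK (finC C fC)) -(fineK (finC D famD)) lee_fin.
apply: (@le_trans _ _ (sup S)); first by apply: sup_upper_bound => //; exists C.
apply/ler_addgt0Pr => e e0.
have [k hk2] := ltr_add_invr (y := 0%R) e0.
have [[mCk CkF _] h1] := HCs k.
have h2 : (fine (m (Cs k)) <= fine (m D))%R.
  apply: fine_le; [exact: finC (HCs k).1|exact: finC famD|].
  apply: le_measure; rewrite ?inE //.
  exact: bigcup_sup.
rewrite add0r in hk2; move: h1 h2 hk2; clear e0; move: (k.+1%:R^-1)%R (sup S) (fine (m (Cs k))) (fine (m D)) e => a b c d1 e1; lra.
Qed.


Lemma main_auto : essential nu -> autocontinuous nu.
Proof.
case=> m [[F Fcov HF] Hm].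
have null A : measurable A -> m A = 0 -> nu A = 0.
  move=> mA mA0; apply/eqP; rewrite eq_le nu_ge0 // andbT leNgt; apply/negP.
  by move=> /(Hm A mA).1; rewrite mA0 ltxx.
pose q n : rat := odflt 0%R (unpickle n).
pose c n : \bar R := (Num.max (ratr (q n)) 0%R)%:E.
have c0 n : 0 <= c n by rewrite lee_fin le_max lexx orbT.
have hD (nk : nat * nat) : exists D, [/\ measurable D, D `<=` F nk.2, nu D <= c nk.1 &
    forall C, measurable C -> C `<=` F nk.2 -> nu C <= c nk.1 -> m C <= m D].
  by apply: max_set; [case: (HF nk.2)|case: (HF nk.2)|exact: c0].
have [D HD] := choice hD.
pose G n := \bigcup_k D (n, k).
have mG n : measurable (G n) by apply: bigcup_measurable => k _; case: (HD (n, k)).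
have Gle n : nu (G n) <= c n by apply: nu_bigcup_le => k; case: (HD (n, k)).
have Gmax n C : measurable C -> nu C <= c n -> nu (C `\` G n) = 0.
  move=> mC Cc; apply: null; first exact: measurableD.
  have piece k : m ((C `&` F k) `\` D (n, k)) = 0.
    have [mDk DkF Dkc Dkmax] := HD (n, k).
    have mFk : measurable (F k) by case: (HF k).
    have mA : measurable (C `&` F k) by exact: measurableI.
    have mAD : measurable ((C `&` F k) `\` D (n, k)) by exact: measurableD.
    have h1 : m (D (n, k) `|` (C `&` F k)) <= m (D (n, k)).
      apply: Dkmax; first exact: measurableU.
        by move=> x [/DkF|[]].
      apply: nu_Ule => //; apply: le_trans Cc; apply: nu_le => //.
    have eqU : D (n, k) `|` (C `&` F k) = D (n, k) `|` ((C `&` F k) `\` D (n, k)).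
      rewrite predeqE => x; split.
        case=> [?|Ax]; first by left.
        by have [?|?] := pselect (D (n, k) x); [left|right].
      by case=> [?|[]]; [left|right].
    have disj : D (n, k) `&` ((C `&` F k) `\` D (n, k)) = set0.
      by rewrite predeqE => x; split => // -[? [_ ?]].
    rewrite eqU measureU // in h1.
    have finDk : m (D (n, k)) \is a fin_num.
      rewrite ge0_fin_numE ?measure_ge0 //; apply: le_lt_trans (proj2 (HF k)).
      by apply: le_measure => //; rewrite inE.
    apply/eqP; rewrite eq_le measure_ge0 andbT.
    by rewrite -(leeD2lE _ _ finDk) adde0.
  apply/eqP; rewrite eq_le measure_ge0 andbT.
  have <- : \sum_(0 <= k <oo) m ((C `&` F k) `\` D (n, k)) = 0.
    by apply: eseries0 => k _ _; exact: piece.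
  apply: measure_sigma_subadditive.
  - by move=> k; apply: measurableD; [apply: measurableI => //; case: (HF k)|case: (HD (n,k))].
  - exact: measurableD.
  - move=> x [Cx nGx].
    have : [set: T] x by [].
    rewrite Fcov => -[k _ Fkx].
    by exists k => //; split => // Dx; apply: nGx; exists k.
pose g n x : \bar R := if pselect (G n x) then c n else +oo.
pose f x := ereal_inf (range (fun n => g n x)).
have f_le n x : G n x -> f x <= c n.
  move=> Gx; apply: ereal_inf_lbound; exists n => //.
  by rewrite /g; case: pselect.
have f_lt x s : f x < s -> exists n, G n x /\ c n < s.
  move=> /ereal_inf_lt[y [n _ gy] hs]; subst y; move: hs.
  rewrite /g; case: pselect => Gx hs.
    by exists n.
  by move: hs; rewrite ltNge leey.
have f0 x : 0 <= f x.
  apply: le_ereal_inf_tmp => y [n _ <-]; rewrite /g; by case: pselect => ?; [exact: c0|exact: leey].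
have mg n : measurable_fun setT (g n).
  move=> _ Y mY; rewrite setTI.
  case: (pselect (Y (c n))) => Yc; case: (pselect (Y +oo)) => Yoo.
  - have -> : g n @^-1` Y = setT.
      by rewrite predeqE => x; split => // _; rewrite /g /preimage /=; case: pselect.
    exact: measurableT.
  - have -> : g n @^-1` Y = G n.
      rewrite predeqE => x; rewrite /g /preimage /=; case: pselect => //.
    exact: mG.
  - have -> : g n @^-1` Y = ~` G n.
      rewrite predeqE => x; rewrite /g /preimage /=; case: pselect => //.
    exact: measurableC.
  - have -> : g n @^-1` Y = set0.
      rewrite predeqE => x; rewrite /g /preimage /=; case: pselect => //.
    exact: measurable0.
have mf : measurable_fun setT f.
  have -> : f = fun x => einfs (fun n => g n x) 0%N.
    apply/funext => x; rewrite /f /einfs /sdrop /=; congr ereal_inf.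
    by rewrite predeqE => y; split => -[n _ <-]; exists n.
  exact: measurable_fun_einfs.
exists f; split => //; split.
  move=> t t0.
  have -> : [set x | t%:E < f x] = setT `&` f @^-1` [set` Interval (BRight t%:E) (BRight +oo%E)].
    rewrite predeqE => x; rewrite /preimage /= in_itv /= leey andbT; split => //.
    by case.
  by apply: mf => //; exact: emeasurable_itv.
move=> B mB; apply/eqP; rewrite eq_le; apply/andP; split.
  apply: le_ereal_inf_tmp => _ [t [t0 [N [mN BN N0]]] <-].
  apply/lee_addgt0Pr => e e0; rewrite -EFinD.
  pose U := \bigcup_(n in [set n | c n < (t + e)%:E]) G n.
  have mU : measurable U by apply: bigcup_measurable => n _; exact: mG.
  have nuU : nu U <= (t + e)%:E.
    apply: nu_bigcup_leP; last by rewrite lee_fin; lra.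
    by move=> n /= hn; split; [exact: mG|apply: le_trans (Gle n) (ltW hn)].
  have BNU : B `<=` N `|` U.
    move=> x Bx; case: (pselect (t%:E < f x)) => h; first by left; apply: BN.
    right; have : f x < (t + e)%:E.
      have fx : f x <= t%:E by rewrite leNgt; apply/negP.
      by apply: le_lt_trans fx _; rewrite lte_fin; lra.
    by move=> /f_lt[n [Gx cn]]; exists n.
  apply: (le_trans (@nu_le B _ mB (measurableU _ _ mN mU) BNU)).
  by apply: nu_Ule => //; rewrite N0 lee_fin; lra.
have nB0 := nu_ge0 B mB.
case E : (nu B) => [r| |]; last by rewrite E in nB0.
  2: by rewrite leey.
rewrite E lee_fin in nB0.
apply/lee_addgt0Pr => e e0; rewrite -EFinD.
have [qq] := rat_in_itvoo (ltr_pwDr e0 (lexx r)).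
rewrite in_itv /= => /andP[rq qt].
set n := pickle qq.
have cn : c n = (ratr qq)%:E.
  by rewrite /c /q /n pickleK /=; congr (_%:E); apply/max_idPl; lra.
apply: ereal_inf_lbound; exists (r + e)%R => //; split; first lra.
exists (B `\` G n); split; first exact: measurableD.
  move=> x [Bx fx]; split => // Gx.
  have := f_le n x Gx; rewrite cn => /(lt_le_trans fx); rewrite lte_fin; lra.
apply: Gmax => //; rewrite E cn lee_fin; lra.
Qed.


Lemma card_dens : autocontinuous nu ->
  (forall N, max_negligible nu N -> N = set0) -> has_cardinal_density nu.
Proof.
move=> [f [f0 [_ Hf]]] Hneg; exists f; split => // B mB; rewrite Hf //.
apply/eqP; rewrite eq_le; apply/andP; split.
  have S0 : 0 <= Defs.sup0 B f by apply: ereal_sup_ubound; left.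
  case E : (Defs.sup0 B f) => [r| |]; last by rewrite E in S0.
    2: by rewrite leey.
  rewrite E lee_fin in S0.
  apply/lee_addgt0Pr => e e0; rewrite -EFinD.
  apply: ereal_inf_lbound; exists (r + e)%R => //; split; first lra.
  exists set0; split => //; last by rewrite nu0.
  move=> x [Bx fx].
  have : f x <= Defs.sup0 B f by apply: ereal_sup_ubound; right; exists x.
  by rewrite E => /(lt_le_trans fx); rewrite lte_fin; lra.
apply: ge_ereal_sup => _ [->|[x Bx <-]].
  by apply: le_ereal_inf_tmp => _ [t [t0 _] <-]; rewrite lee_fin; lra.
apply: le_ereal_inf_tmp => _ [t [t0 Nt] <-].
rewrite leNgt; apply/negP => h.
have := Hneg _ Nt; rewrite predeqE => /(_ x) [+ _]; apply; by split.
Qed.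

End Helpers.

Local Open Scope classical_set_scope.

Theorem corollary3p4 (d : measure_display) (E : measurableType d) (R : realType)
  (nu : set E -> \bar R) :
  [set: E] !=set0 ->
  sigma_maxitive nu -> essential nu ->
  autocontinuous nu /\
  ((forall N : set E, max_negligible nu N -> N = set0) -> has_cardinal_density nu).
Proof.
move=> _ Hnu Hess.
have Ha := @main_auto _ _ _ nu Hnu Hess.
by split => // Hneg; exact: (@card_dens _ _ _ nu Hnu).
Qed.
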